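(* Let $1\le k\le d$ be integers, let $(p_m)_{m\in\mathbb Z}$ be the sequence defined below, and let $a,b,\mu$ be integers with $k+a\ge0$. Then $$\sum_{m=-\infty}^{\mu}p_{\mu-m}\binom{d+a}{m+b}=\sum_{m=-b}^{\mu}(d-k)^{\mu-m}\binom{k+a}{m+b}$$ (both sums have finitely many nonzero terms; an empty sum is $0$).
   Context: Sequence: $p_m=0$ for $m<0$, $p_0=1$, and $p_m=\sum_{\ell=1}^{m}(\ell-1)\binom{d-k+1}{\ell}p_{m-\ell}$ for $m\ge1$. Conventions: $0^0=1$; for integers $N\ge0$, $\binom{N}{r}$ is the usual binomial coefficient for $0\le r\le N$ and $0$ for $r<0$ or $r>N$. *)

(* Defs.v *)
From mathcomp Require Import all_boot all_order all_algebra.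
Set Implicit Arguments. Unset Strict Implicit. Unset Printing Implicit Defensive.
Import Order.TTheory GRing.Theory Num.Theory.

Definition binZ (N : nat) (r : int) : nat :=
  match r with Posz n => 'C(N, n) | Negz _ => 0%N end.

Definition extZ (p : nat -> nat) (m : int) : nat :=
  match m with Posz n => p n | Negz _ => 0%N end.

Definition sumZ (lo hi : int) (f : int -> nat) : nat :=
  if (lo <= hi)%R then \sum_(i < (`|hi - lo|%N).+1) f (lo + (i : nat)%:Z)%R
  else 0%N.

(* Main.v *)
Require Import Defs.
From mathcomp Require Import all_boot all_order all_algebra.
From mathcomp Require Import zify.
Import Order.TTheory GRing.Theory Num.Theory.

Definition conv (f g : nat -> nat) (N : nat) := \sum_(j < N.+1) f (N - j) * g j.

Lemma conv_pascal f g g' N : g' 0 = g 0 -> (forall j, g' j.+1 = g j.+1 + g j) ->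
  conv f g' N.+1 = conv f g N.+1 + conv f g N.
Proof.
move=> h0 hS; rewrite /conv big_ord_recl [in X in _ = X + _]big_ord_recl /= h0.
rewrite -addnA; congr (_ + _).
under eq_bigr => i _ do rewrite /bump /= add1n hS mulnDr subSS.
rewrite big_split /=; congr (_ + _).
Qed.

Lemma r_pow (n : nat) (p : nat -> nat) : p 0 = 1 ->
  (forall m : nat, (1 <= m)%N ->
     p m = (\sum_(1 <= l < m.+1) (l - 1) * 'C(n + 1, l) * p (m - l))%N) ->
  forall N, conv p (fun j => 'C(n, j)) N = n ^ N.
Proof.
move=> p0 prec; elim=> [|M IH]; first by rewrite /conv big_ord1 /= p0 bin0.
pose s N := conv p (fun j => 'C(n.+1, j)) N.
have e1 : s M.+1 = conv p (fun j => 'C(n, j)) M.+1 + conv p (fun j => 'C(n, j)) M.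
  by apply: conv_pascal => [|j]; rewrite ?bin0 ?binS.
have e2 : s M.+1 = n.+1 * conv p (fun j => 'C(n, j)) M.
  rewrite /s /conv big_ord_recl /= subn0 bin0 muln1 (prec M.+1) //.
  rewrite big_add1 /= big_mkord -big_split /= big_distrr /=.
  apply: eq_bigr => i _; rewrite /bump /= add1n subSS addn1.
  rewrite subn0 subSS -(mulnC (p _)) -mulnDr -[X in _ + X]mul1n -mulnDl addn1 mulnC.
  rewrite -mul_bin_diag /=. lia.
rewrite IH in e1 e2; rewrite expnS; lia.
Qed.

Lemma main_nat (n : nat) (p : nat -> nat) : p 0 = 1 ->
  (forall m : nat, (1 <= m)%N ->
     p m = (\sum_(1 <= l < m.+1) (l - 1) * 'C(n + 1, l) * p (m - l))%N) ->
  forall K N, conv p (fun j => 'C(K + n, j)) N = conv (fun i => n ^ i) (fun j => 'C(K, j)) N.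
Proof.
move=> p0 prec; elim=> [|K IH] N.
  rewrite add0n r_pow // /conv big_ord_recl /= bin0 subn0 muln1 big1 ?addn0 //.
  by move=> i _; rewrite bin0n muln0.
case: N => [|N]; first by rewrite /conv !big_ord1 /= !bin0 subnn p0.
have h1 := conv_pascal p (fun j => 'C(K + n, j)) (fun j => 'C(K.+1 + n, j)) N.
have h2 := conv_pascal (fun i => n ^ i) (fun j => 'C(K, j)) (fun j => 'C(K.+1, j)) N.
rewrite h1 ?h2 ?IH //.
all: try (by move=> j; rewrite ?addSn binS); by rewrite !bin0.
Qed.

Theorem lemma4 (d k : nat) (p : nat -> nat) (a b mu : int) :
  (1 <= k)%N -> (k <= d)%N ->
  p 0%N = 1%N ->
  (forall m : nat, (1 <= m)%N ->
     p m = (\sum_(1 <= l < m.+1) (l - 1) * 'C(d - k + 1, l) * p (m - l))%N) ->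
  (0 <= Posz k + a)%R ->
  sumZ (- b)%R mu
    (fun m => muln (extZ p (mu - m)%R) (binZ (absz (Posz d + a)%R) (m + b)%R))
  = sumZ (- b)%R mu
    (fun m => muln (expn (d - k) (absz (mu - m)%R))
                   (binZ (absz (Posz k + a)%R) (m + b)%R)).
Proof.
move=> hk hkd p0 prec hka.
rewrite /sumZ; case: ifP => hle //.
set N := `|(mu - - b)%R|.
have hN : (mu - - b)%R = Posz N by rewrite /N; lia.
set K := `|(Posz k + a)%R|.
have hK : (Posz k + a)%R = Posz K by rewrite /K; lia.
have hD : `|(Posz d + a)%R| = (K + (d - k))%N by lia.
have e1 : forall i : 'I_N.+1, (mu - (- b + (i : nat)%:Z))%R = Posz (N - i).
  move=> i; have := ltn_ord i; lia.
have e2 : forall i : 'I_N.+1, (- b + (i : nat)%:Z + b)%R = Posz i.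
  move=> i; lia.
transitivity (conv p (fun j => 'C(K + (d - k), j)) N).
  by apply: eq_bigr => i _; rewrite e1 e2 hD.
rewrite main_nat // -/K.
by apply: eq_bigr => i _; rewrite e1 e2.
Qed.
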